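(* Let $p\in[1,\infty]$, let $Y$ be a complex Banach space, let $(\mathcal G,+)$ be a countable discrete group and $\mathbf X=\ell^p(\mathcal G,Y)$, with $\mathcal P$ and $\mathcal L(\mathbf X,\mathcal P)$ as in the context. Let $(\Omega,\mathcal G,\alpha)$ be a dynamical system and $A:\Omega\to\mathcal L(\mathbf X,\mathcal P)$ a family of operators over it. Then $\sigma^{\mathrm{op}}(A(\omega))=\{A(\nu):\nu\in\Omega\}$ for all pseudoergodic $\omega\in\Omega$. In particular, $A(\omega)$ is self-similar for each pseudoergodic $\omega\in\Omega$.
   Context: $(\mathcal G,+)$ is written additively but need not be abelian. Choose subsets $\mathcal G_n\subseteq\mathcal G$ with $\emptyset\neq\mathcal G_n\neq\mathcal G$, such that for each $m$ there is $N_m$ with $\mathcal G_m\subseteq\mathcal G_n$ for $n\ge N_m$, and $\bigcup_n\mathcal G_n=\mathcal G$; $P_n$ is multiplication by $\mathbf 1_{\mathcal G_n}$, $\mathcal P=(P_n)$. $K\in\mathcal L(\mathbf X)$ is $\mathcal P$-compact if $\|K(I-P_n)\|\to0$ and $\|(I-P_n)K\|\to0$; $\mathcal K(\mathbf X,\mathcal P)$ is the set of these and $\mathcal L(\mathbf X,\mathcal P)=\{A\in\mathcal L(\mathbf X):AK,KA\in\mathcal K(\mathbf X,\mathcal P)\ \forall K\in\mathcal K(\mathbf X,\mathcal P)\}$. $(A_n)$ converges $\mathcal P$-strongly to $A$ ($\mathcal P\text{-}\lim A_n=A$) if $\|K(A_n-A)\|+\|(A_n-A)K\|\to0$ for all $K\in\mathcal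 K(\mathbf X,\mathcal P)$. $V_gx=(x_{h+g})_{h\in\mathcal G}$. $g_n\to\infty$ means $(g_n)$ eventually leaves every finite subset. For $B\in\mathcal L(\mathbf X,\mathcal P)$ and $g=(g_n)$ with $g_n\to\infty$, the limit operator is $B_g:=\mathcal P\text{-}\lim V_{g_n}BV_{-g_n}$ if it exists; $\sigma^{\mathrm{op}}(B)$ is the set of all limit operators of $B$; $B$ is self-similar if $B\in\sigma^{\mathrm{op}}(B)$. A dynamical system $(\Omega,\mathcal G,\alpha)$: $\Omega$ compact metric space, $\alpha$ maps $\mathcal G$ to homeomorphisms of $\Omega$ with $\alpha(g+h)=\alpha(g)\circ\alpha(h)$. $L(\omega)=\{\nu:\exists g_n\to\infty,\ \alpha(g_n)(\omega)\to\nu\}$; $\omega$ is pseudoergodic if $L(\omega)=\Omega$. A family of operators over $(\Omega,\mathcal G,\alpha)$ is $A:\Omega\to\mathcal L(\mathbf X,\mathcal P)$ with $A(\alpha(g)(\omega))=V_gA(\omega)V_{-g}$ for all $\omega,g$, and such that $\omega_n\to\omega$ implies $\mathcal P\text{-}\lim A(\omega_n)=A(\omega)$. *)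

(* Defs.v *)
From mathcomp Require Import all_boot all_order all_algebra.
From mathcomp Require Import all_classical all_reals all_analysis.
From mathcomp Require Import complex.
Import Order.TTheory GRing.Theory Num.Theory.

Set Implicit Arguments.
Unset Strict Implicit.
Unset Printing Implicit Defensive.

Local Open Scope classical_set_scope.
Local Open Scope ring_scope.

Record addGroup := AddGroup {
  gcar :> choiceType;
  gadd : gcar -> gcar -> gcar;
  gopp : gcar -> gcar;
  gzero : gcar;
  gaddA : forall a b c, gadd a (gadd b c) = gadd (gadd a b) c;
  gadd0l : forall a, gadd gzero a = a;
  gadd0r : forall a, gadd a gzero = a;
  gaddNl : forall a, gadd (gopp a) a = gzero;
  gaddNr : forall a, gadd a (gopp a) = gzero }.

Section LP.
Context (R : realType) (G : addGroup) (Y : completeNormedModType R[i]).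

(* real-valued norm on Y (the norm of a normed C-module takes values in C) *)
Definition nrm (y : Y) : R := complex.Re `|y|.

(* sequences x : G -> Y; operators are maps on such sequences, only
   their behaviour on l^p(G,Y) matters *)
Definition Op := (G -> Y) -> (G -> Y).

Definition lpnorm (p : \bar R) (x : G -> Y) : \bar R :=
  match p with
  | r%:E => poweR (esum [set: G] (fun g => (powR (nrm (x g)) r)%:E)) r^-1
  | +oo%E => ereal_sup (range (fun g => (nrm (x g))%:E))
  | -oo%E => 0%E
  end.

Definition in_lp (p : \bar R) (x : G -> Y) : Prop := (lpnorm p x < +oo)%E.

Definition op_eq (p : \bar R) (A B : Op) : Prop :=
  forall x, in_lp p x -> A x = B x.

Definition is_bounded (p : \bar R) (T : Op) : Prop :=
  (forall x, in_lp p x -> in_lp p (T x)) /\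
  (forall (a : R[i]) x y, in_lp p x -> in_lp p y ->
     T (fun g => a *: x g + y g) = (fun g => a *: T x g + T y g)) /\
  (exists C : R, forall x, in_lp p x -> (lpnorm p (T x) <= C%:E * lpnorm p x)%E).

Definition opnorm (p : \bar R) (T : Op) : \bar R :=
  ereal_sup [set lpnorm p (T x) | x in [set x | in_lp p x /\ (lpnorm p x <= 1)%E]].

Definition opsub (A B : Op) : Op := fun x g => A x g - B x g.
Definition opcomp (A B : Op) : Op := fun x => A (B x).
Definition opid : Op := fun x => x.

Definition Pn (Gn : nat -> set G) (n : nat) : Op :=
  fun x g => if `[< Gn n g >] then x g else 0.

Definition V (g : G) : Op := fun x h => x (@gadd G h g).

Definition cvg0 (u : nat -> \bar R) : Prop := (u @ \oo --> (0 : \bar R))%E.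

Definition admissible_seq (Gn : nat -> set G) : Prop :=
  (forall n, Gn n !=set0 /\ Gn n != [set: G]) /\
  (forall m, exists N, forall n, (N <= n)%N -> Gn m `<=` Gn n) /\
  \bigcup_n Gn n = [set: G].

Definition Pcompact (p : \bar R) (Gn : nat -> set G) (K : Op) : Prop :=
  is_bounded p K /\
  cvg0 (fun n => opnorm p (opcomp K (opsub opid (Pn Gn n)))) /\
  cvg0 (fun n => opnorm p (opcomp (opsub opid (Pn Gn n)) K)).

Definition in_LXP (p : \bar R) (Gn : nat -> set G) (A : Op) : Prop :=
  is_bounded p A /\
  forall K, Pcompact p Gn K ->
    Pcompact p Gn (opcomp A K) /\ Pcompact p Gn (opcomp K A).

Definition Plim (p : \bar R) (Gn : nat -> set G) (An : nat -> Op) (A : Op) : Prop :=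
  forall K, Pcompact p Gn K ->
    cvg0 (fun n => opnorm p (opcomp K (opsub (An n) A))) /\
    cvg0 (fun n => opnorm p (opcomp (opsub (An n) A) K)).

Definition to_infty (gs : nat -> G) : Prop :=
  forall F : set G, finite_set F -> exists N, forall n, (N <= n)%N -> ~ F (gs n).

Definition limop (p : \bar R) (Gn : nat -> set G) (B : Op) (gs : nat -> G) (C : Op) : Prop :=
  to_infty gs /\ is_bounded p C /\
  Plim p Gn (fun n => opcomp (V (gs n)) (opcomp B (V (@gopp G (gs n))))) C.

Definition in_sigma_op (p : \bar R) (Gn : nat -> set G) (B C : Op) : Prop :=
  exists gs, limop p Gn B gs C.

Definition self_similar (p : \bar R) (Gn : nat -> set G) (B : Op) : Prop :=
  in_sigma_op p Gn B B.

End LP.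

Section Dyn.
Context (R : realType) (G : addGroup) (Om : metricType R).

Definition homeomorphism (f : Om -> Om) : Prop :=
  continuous f /\ exists f' : Om -> Om, continuous f' /\ cancel f f' /\ cancel f' f.

Definition dynamical_system (alpha : G -> Om -> Om) : Prop :=
  compact [set: Om] /\
  (forall g, homeomorphism (alpha g)) /\
  (forall g h, alpha (@gadd G g h) = alpha g \o alpha h).

Definition limit_set (alpha : G -> Om -> Om) (om : Om) : set Om :=
  [set nu | exists gs : nat -> G, to_infty gs /\
     (fun n => alpha (gs n) om) @ \oo --> nu].

Definition pseudoergodic (alpha : G -> Om -> Om) (om : Om) : Prop :=
  limit_set alpha om = [set: Om].

Definition family_of_ops (Y : completeNormedModType R[i]) (p : \bar R)
  (Gn : nat -> set G) (alpha : G -> Om -> Om) (A : Om -> Op G Y) : Prop :=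
  (forall om, in_LXP p Gn (A om)) /\
  (forall om g, op_eq p (A (alpha g om))
     (opcomp (V g) (opcomp (A om) (V (@gopp G g))))) /\
  (forall (oms : nat -> Om) om, oms @ \oo --> om ->
     Plim p Gn (fun n => A (oms n)) (A om)).

End Dyn.

(* Main.v *)
Require Import Defs.
From mathcomp Require Import all_boot all_order all_algebra.
From mathcomp Require Import all_classical all_reals all_analysis.
From mathcomp Require Import complex.
From mathcomp Require Import lra ring.
Import Order.TTheory GRing.Theory Num.Theory.
Set Implicit Arguments.
Unset Strict Implicit.
Local Open Scope classical_set_scope.
Local Open Scope ring_scope.
Local Open Scope complex_scope.

Section Nrm.
Context (R : realType) (Y : completeNormedModType R[i]).

Lemma normC_nrm (y : Y) : `|y| = (nrm y)%:C.
Proof.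
rewrite /nrm; have := normr_ge0 y; case: `|y| => a b.
by rewrite lecE /= => /andP[/eqP -> _].
Qed.

Lemma nrm_ge0 (y : Y) : 0 <= nrm y.
Proof. by have := normr_ge0 y; rewrite normC_nrm lecR. Qed.

Lemma nrm0 : nrm (0 : Y) = 0.
Proof. by rewrite /nrm normr0. Qed.

Lemma nrm0' (z : Y) : z = 0 -> nrm z = 0.
Proof. by move=> ->; exact: nrm0. Qed.

Lemma nrm_eq0 (y : Y) : nrm y = 0 -> y = 0.
Proof. by move=> h; apply/normr0_eq0; rewrite normC_nrm h. Qed.

Lemma nrmD (u v : Y) : nrm (u + v) <= nrm u + nrm v.
Proof.
have := ler_normD u v; rewrite !normC_nrm -rmorphD /=.
by rewrite lecR.
Qed.

Lemma nrmN (u : Y) : nrm (- u) = nrm u.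
Proof. by rewrite /nrm normrN. Qed.

Lemma nrmB (u v : Y) : nrm (u - v) = nrm (v - u).
Proof. by rewrite /nrm distrC. Qed.

Lemma nrmZ (a : R[i]) (y : Y) : nrm (a *: y) = (complex.Re `|a|) * nrm y.
Proof.
rewrite {1}/nrm normrZ normC_nrm [X in X * _]normc_def -rmorphM /=.
by case: a.
Qed.

Lemma ReC_norm (s : R) : 0 <= s -> complex.Re `|s%:C| = s.
Proof.
move=> s0; rewrite normc_def /= expr0n /= addr0 sqrtr_sqr ger0_norm //.
Qed.

End Nrm.

Section Aux.
Context (R : realType).

Lemma powR_sum_le (r u v : R) : 0 < r -> 0 <= u -> 0 <= v ->
  (u + v) `^ r <= 2 `^ r * (u `^ r + v `^ r).
Proof.
move=> r0.
wlog uv : u v / u <= v.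
  move=> H u0 v0; case: (leP u v) => [h|/ltW h]; first exact: H.
  by rewrite addrC [u `^ r + _]addrC; apply: H.
move=> u0 v0.
have h1 : (u + v) `^ r <= (2 * v) `^ r.
  apply: (ge0_ler_powR (ltW r0)); rewrite ?nnegrE; try lra.
rewrite powRM in h1; [|by []|by []].
apply: le_trans h1 _; apply: ler_wpM2l; first exact: powR_ge0.
by rewrite lerDr powR_ge0.
Qed.

Lemma esumZ_le (T : choiceType) (I : set T) (c : R) (f : T -> \bar R) :
  0 <= c -> (forall i, (0 <= f i)%E) ->
  (esum I (fun i => c%:E * f i) <= c%:E * esum I f)%E.
Proof.
move=> c0 f0; apply: ge_ereal_sup => _ [X XI <-].
rewrite -ge0_mule_fsumr //; apply: lee_wpmul2l; first by rewrite lee_fin.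
by apply: ereal_sup_ubound; exists X.
Qed.

End Aux.

Section LPlem.
Context (R : realType) (G : addGroup) (Y : completeNormedModType R[i]).
Implicit Types (x y : G -> Y).

Definition Ssum (r : R) x : \bar R :=
  esum [set: G] (fun g => ((nrm (x g)) `^ r)%:E).

Lemma Ssum_ge0 r x : (0 <= Ssum r x)%E.
Proof. by apply: esum_ge0 => g _; rewrite lee_fin powR_ge0. Qed.

Lemma in_lp_fin (r : R) x : 0 < r -> in_lp r%:E x <-> (Ssum r x < +oo)%E.
Proof.
move=> r0; rewrite /in_lp /lpnorm -/(Ssum r x); split.
  by apply: lty_poweRy; rewrite invr_eq0 gt_eqF.
exact: poweR_lty.
Qed.

Lemma lp_single p x g : (1 <= p)%E -> ((nrm (x g))%:E <= lpnorm p x)%E.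
Proof.
case: p => [r| |] //= hp.
- rewrite lee_fin in hp; have r0 : 0 < r by lra.
  have h1 : ((nrm (x g) `^ r)%:E <= Ssum r x)%E.
    apply: esum_ge; exists [set g]; first by split; [exact: finite_set1|].
    by rewrite fsbig_set1.
  have := gt0_ler_poweR (r := r^-1) _ _ _ h1.
  rewrite poweR_EFin -powRrM mulfV ?gt_eqF // powRr1 ?nrm_ge0 //.
  apply; first by rewrite invr_ge0 ltW.
    by rewrite in_itv /= lee_fin powR_ge0 leey.
  by rewrite in_itv /= Ssum_ge0 leey.
- by apply: ereal_sup_ubound; exists g.
Qed.

Lemma lpnorm_ge0 p x : (1 <= p)%E -> (0 <= lpnorm p x)%E.
Proof.
move=> hp; apply: le_trans (lp_single x (@gzero G) hp).
by rewrite lee_fin nrm_ge0.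
Qed.

Lemma lp_mono p x y : (1 <= p)%E -> (forall g, nrm (x g) <= nrm (y g)) ->
  (lpnorm p x <= lpnorm p y)%E.
Proof.
case: p => [r| |] //= hp h.
- rewrite lee_fin in hp; have r0 : 0 < r by lra.
  apply: (gt0_ler_poweR (r := r^-1)).
  + by rewrite invr_ge0 ltW.
  + by rewrite in_itv /= Ssum_ge0 leey.
  + by rewrite in_itv /= Ssum_ge0 leey.
  apply: le_esum => g _; rewrite lee_fin.
  by apply: (ge0_ler_powR (ltW r0)); rewrite ?nnegrE ?nrm_ge0 ?h.
- apply: ge_ereal_sup => _ [g _ <-].
  apply: le_trans (lp_single y g (leey _)).
  by rewrite lee_fin h.
Qed.

Lemma lp0 p : (1 <= p)%E -> lpnorm p (fun _ : G => (0 : Y)) = 0%E.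
Proof.
case: p => [r| |] //= hp.
- rewrite lee_fin in hp; have r0 : 0 < r by lra.
  rewrite esum1 ?poweR0r ?invr_eq0 ?gt_eqF //.
  by move=> g _; rewrite nrm0 powR0 ?gt_eqF.
- apply/eqP; rewrite eq_le; apply/andP; split.
    by apply: ge_ereal_sup => _ [g _ <-]; rewrite nrm0.
  have := lp_single (fun _ : G => (0 : Y)) (@gzero G) (leey _); rewrite nrm0 /lpnorm.
by rewrite nrm0.
Qed.

End LPlem.

Section LPlem2.
Context (R : realType) (G : addGroup) (Y : completeNormedModType R[i]).
Implicit Types (x y : G -> Y).

Lemma Re_norm_ge0 (a : R[i]) : 0 <= complex.Re `|a|.
Proof. by have := normr_ge0 a; rewrite lecE => /andP[]. Qed.

Lemma nrm_lin (a : R[i]) (u v : Y) :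
  nrm (a *: u + v) <= complex.Re `|a| * nrm u + nrm v.
Proof. by apply: le_trans (nrmD _ _) _; rewrite nrmZ. Qed.

Lemma lp_fin_real p x : (1 <= p)%E -> in_lp p x -> lpnorm p x \is a fin_num.
Proof.
move=> hp hx; rewrite ge0_fin_numE //; exact: lpnorm_ge0.
Qed.

Lemma lp_lin p (a : R[i]) x y : (1 <= p)%E -> in_lp p x -> in_lp p y ->
  in_lp p (fun g => a *: x g + y g).
Proof.
have c0 := Re_norm_ge0 a; set c := complex.Re `|a|.
case: p => [r| |] //= hp hx hy.
- rewrite lee_fin in hp; have r0 : 0 < r by lra.
  move: hx hy; rewrite !in_lp_fin // => hx hy.
  have step : (Ssum r (fun g => (a *: x g + y g)%R) <=
      (2 `^ r * c `^ r)%:E * Ssum r x + (2 `^ r)%:E * Ssum r y)%E.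
    apply: le_trans (_ : esum [set: G] (fun g => (2 `^ r * c `^ r)%:E *
       (nrm (x g) `^ r)%:E + (2 `^ r)%:E * (nrm (y g) `^ r)%:E) <= _)%E.
      apply: le_esum => g _; rewrite -!EFinM -EFinD lee_fin.
      apply: le_trans (_ : (c * nrm (x g) + nrm (y g)) `^ r <= _).
        apply: (ge0_ler_powR (ltW r0)); rewrite ?nnegrE ?nrm_ge0 ?nrm_lin //.
        by rewrite addr_ge0 ?mulr_ge0 ?nrm_ge0.
      apply: le_trans (powR_sum_le r0 _ _) _.
      - by rewrite mulr_ge0 ?nrm_ge0.
      - exact: nrm_ge0.
      by rewrite powRM ?nrm_ge0 // mulrDr mulrA.
    rewrite esumD; [| by move=> g _; rewrite -EFinM lee_fin !mulr_ge0 ?powR_ge0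
      | by move=> g _; rewrite -EFinM lee_fin !mulr_ge0 ?powR_ge0].
    apply: leeD; apply: esumZ_le => [|g]; rewrite ?lee_fin ?mulr_ge0 ?powR_ge0 //.
  apply: le_lt_trans step _; apply: lte_add_pinfty; apply: lte_mul_pinfty => //;
    by rewrite lee_fin ?mulr_ge0 ?powR_ge0.
- have hx' := lp_fin_real (leey _) hx; have hy' := lp_fin_real (leey _) hy.
  apply: le_lt_trans (_ : (c%:E * lpnorm +oo x + lpnorm +oo y < +oo)%E).
    apply: ge_ereal_sup => _ [g _ <-].
    apply: le_trans (_ : ((c * nrm (x g) + nrm (y g))%:E <= _)%E).
      by rewrite lee_fin nrm_lin.
    rewrite EFinD EFinM; apply: leeD; last exact: lp_single (leey _).
    by apply: lee_wpmul2l; [rewrite lee_fin|exact: lp_single (leey _)].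
  by apply: lte_add_pinfty => //; apply: lte_mul_pinfty => //; rewrite lee_fin.
Qed.

Lemma lp_scale p x : (1 <= p)%E -> in_lp p x ->
  exists s : R, 0 < s /\ (lpnorm p (fun g => s%:C *: x g) <= 1)%E.
Proof.
case: p => [r| |] //= hp hx.
- rewrite lee_fin in hp; have r0 : 0 < r by lra.
  have hS := hx; rewrite in_lp_fin // in hS.
  have hSf : Ssum r x \is a fin_num by rewrite ge0_fin_numE ?Ssum_ge0.
  set M := fine (Ssum r x).
  have M0 : 0 <= M by rewrite /M fine_ge0 ?Ssum_ge0.
  exists ((M + 1)^-1 `^ r^-1); split.
    by rewrite powR_gt0 // invr_gt0; lra.
  set s := (M + 1)^-1 `^ r^-1.
  have s0 : 0 <= s by exact: powR_ge0.
  have sr : s `^ r = (M + 1)^-1.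
    by rewrite /s -powRrM mulVf ?gt_eqF // powRr1 // invr_ge0; lra.
  rewrite -(poweR1r r^-1); apply: (gt0_ler_poweR (r := r^-1)).
  + by rewrite invr_ge0 ltW.
  + by rewrite in_itv /= -/(Ssum r _) Ssum_ge0 leey.
  + by rewrite in_itv /= lee_fin ler01 leey.
  rewrite -/(Ssum r _).
  apply: le_trans (_ : ((s `^ r)%:E * Ssum r x <= _)%E).
    apply: le_trans (esumZ_le _ _ _); last 2 first.
    - exact: powR_ge0.
    - by move=> g; rewrite lee_fin powR_ge0.
    apply: le_esum => g _; rewrite -EFinM lee_fin nrmZ ReC_norm // powRM ?nrm_ge0 //.
  rewrite -(fineK hSf) -/M -EFinM lee_fin sr.
  rewrite ler_pdivrMl; last lra.
  lra.
- have hx' := lp_fin_real (leey _) hx.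
  set M := fine (lpnorm +oo x).
  have M0 : 0 <= M by rewrite /M fine_ge0 // lpnorm_ge0.
  exists (M + 1)^-1; split; first by rewrite invr_gt0; lra.
  apply: ge_ereal_sup => _ [g _ <-].
  rewrite lee_fin nrmZ ReC_norm; last by rewrite invr_ge0; lra.
  have : (nrm (x g) <= M).
    by rewrite -lee_fin /M fineK //; exact: lp_single (leey _).
  move=> h; rewrite ler_pdivrMl; last lra.
  have := nrm_ge0 (x g); lra.
Qed.
End LPlem2.

Lemma cvg0_lt (R : realType) (u : nat -> \bar R) (e : R) : cvg0 u -> 0 < e ->
  exists N, forall n, (N <= n)%N -> (u n < e%:E)%E.
Proof.
move=> hu e0; have := hu _ (@nbhs_open_ereal_lt R 0 (fun _ => e) e0).
by move=> [N _ HN]; exists N => n /HN.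
Qed.

Section Ops.
Context (R : realType) (G : addGroup) (Y : completeNormedModType R[i]).
Context (p : \bar R) (Gn : nat -> set G).
Implicit Types (x y : G -> Y) (T K A B C : Op G Y).

Lemma opnorm_ub T x : in_lp p x -> (lpnorm p x <= 1)%E ->
  (lpnorm p (T x) <= opnorm p T)%E.
Proof. by move=> hx h1; apply: ereal_sup_ubound; exists x. Qed.

Lemma opnorm_ext T1 T2 : (forall x, in_lp p x -> T1 x = T2 x) ->
  opnorm p T1 = opnorm p T2.
Proof.
move=> E; rewrite /opnorm; congr ereal_sup.
by apply/seteqP; split => _ [x hx <-]; exists x => //; rewrite E //; case: hx.
Qed.

Lemma in_lp0 : (1 <= p)%E -> in_lp p (fun _ : G => (0 : Y)).
Proof. by move=> hp; rewrite /in_lp lp0. Qed.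

Lemma opnorm_zero T : (1 <= p)%E ->
  (forall x, in_lp p x -> T x = (fun _ => 0)) -> opnorm p T = 0%E.
Proof.
move=> hp E; apply/eqP; rewrite eq_le; apply/andP; split.
  by apply: ge_ereal_sup => _ [x [hx _] <-]; rewrite E // lp0.
have h0 := @lp0 R G Y p hp.
have := @opnorm_ub T (fun _ => 0) (in_lp0 hp).
rewrite h0 lee01 => /(_ isT) h; apply: le_trans h; exact: lpnorm_ge0.
Qed.

Lemma Pn_bounded m : (1 <= p)%E -> is_bounded p (Pn (Y:=Y) Gn m).
Proof.
move=> hp.
have hmono x : (lpnorm p (Pn Gn m x) <= lpnorm p x)%E.
  apply: (lp_mono hp) => g; rewrite /Pn; case: ifP => _ //.
  by rewrite nrm0' ?nrm_ge0.
split; [|split].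
- by move=> x hx; apply: le_lt_trans (hmono x) hx.
- move=> a x y _ _; apply: funext => g; rewrite /Pn; case: ifP => // _.
  by rewrite scaler0 addr0.
- by exists 1 => x _; rewrite mul1e.
Qed.

Lemma Pn_compact m : (1 <= p)%E -> admissible_seq Gn -> Pcompact p Gn (Pn (Y:=Y) Gn m).
Proof.
move=> hp [_ [hinc _]]; have [N HN] := hinc m.
split; first exact: Pn_bounded.
split; apply: cvg_near_cst; exists N => // n /= /HN sub;
  apply: opnorm_zero => // x _; apply: funext => g;
  rewrite /opcomp /opsub /opid /Pn.
- case: ifP => // /asboolP /sub /asboolP ->; exact: subrr.
- case hm: `[< Gn m g >]; last by case: ifP => _; rewrite subrr.
  have -> : `[< Gn n g >] = true by apply/asboolP; apply: sub; exact/asboolP.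
  exact: subrr.
Qed.

Lemma is_bounded_ext A C : (1 <= p)%E -> is_bounded p A -> op_eq p A C ->
  is_bounded p C.
Proof.
move=> hp [h1 [h2 [M hM]]] E; split; [|split].
- by move=> x hx; rewrite -E //; apply: h1.
- move=> a x y hx hy; rewrite -E ?h2 ?E //; exact: lp_lin.
- by exists M => x hx; rewrite -E //; apply: hM.
Qed.

Lemma Plim_ext (An Bn : nat -> Op G Y) A B :
  (forall n, op_eq p (An n) (Bn n)) -> op_eq p A B ->
  Plim p Gn An A -> Plim p Gn Bn B.
Proof.
move=> EA E h K hK; have [c1 c2] := h K hK; split.
- suff -> : (fun n => opnorm p (opcomp K (opsub (Bn n) B))) =
            (fun n => opnorm p (opcomp K (opsub (An n) A))) by [].
  apply: funext => n; apply: opnorm_ext => x hx.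
  by rewrite /opcomp /opsub EA ?E.
- suff -> : (fun n => opnorm p (opcomp (opsub (Bn n) B) K)) =
            (fun n => opnorm p (opcomp (opsub (An n) A) K)) by [].
  apply: funext => n; apply: opnorm_ext => x hx.
  have hKx : in_lp p (K x) by case: hK => [[hb _] _]; exact: hb.
  by rewrite /opcomp /opsub EA ?E.
Qed.

Lemma pt_bound m T x g : (1 <= p)%E -> in_lp p x -> (lpnorm p x <= 1)%E ->
  Gn m g -> ((nrm (T x g))%:E <= opnorm p (opcomp (Pn Gn m) T))%E.
Proof.
move=> hp hx h1 hg; apply: le_trans (opnorm_ub _ hx h1).
have := lp_single (Pn Gn m (T x)) g hp.
by rewrite /Pn /opcomp asboolT.
Qed.

Lemma agree_ball A B : (1 <= p)%E -> is_bounded p A -> is_bounded p B ->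
  (forall x, in_lp p x -> (lpnorm p x <= 1)%E -> A x = B x) -> op_eq p A B.
Proof.
move=> hp [_ [hA _]] [_ [hB _]] E x hx.
have [s [s0 hs]] := lp_scale hp hx.
set x' := fun g => s%:C *: x g.
have hx' : in_lp p x' by apply: le_lt_trans hs _; exact: ltey.
have h0 := in_lp0 hp.
have -> : x = (fun g => (s^-1)%:C *: x' g + (fun _ : G => (0 : Y)) g).
  apply: funext => g; rewrite /x' /= scalerA -rmorphM /= mulVf ?gt_eqF //.
  by rewrite scale1r addr0.
rewrite (hA _ _ _ hx' h0) (hB _ _ _ hx' h0) E // E //.
by rewrite lp0.
Qed.
End Ops.

Close Scope complex_scope.
Unset Implicit Arguments.
Set Strict Implicit.

Theorem corollary4p3 (R : realType) (p : \bar R) (Y : completeNormedModType R[i])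
  (G : addGroup) (Gn : nat -> set G) (Om : metricType R)
  (alpha : G -> Om -> Om) (A : Om -> Op G Y) :
  (1 <= p)%E ->
  countable [set: gcar G] ->
  admissible_seq Gn ->
  dynamical_system alpha ->
  family_of_ops p Gn alpha A ->
  forall om : Om, pseudoergodic alpha om ->
    (forall C : Op G Y, in_sigma_op p Gn (A om) C <-> exists nu : Om, op_eq p (A nu) C) /\
    self_similar p Gn (A om).
Proof.
move=> hp _ hadm [hcomp [hhom halpha]] [hLXP [hcov hcont]] om hpe.
have sup_dir : forall C nu, op_eq p (A nu) C -> in_sigma_op p Gn (A om) C.
  move=> C nu E.
  have : limit_set alpha om nu by rewrite hpe.
  case=> gs [hgs hcv].
  exists gs; split => //; split.
    exact: is_bounded_ext hp (hLXP nu).1 E.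
  apply: (@Plim_ext _ _ _ _ _ (fun n => A (alpha (gs n) om)) _ (A nu)).
  - by move=> n; exact: hcov.
  - exact: E.
  - exact: hcont hcv.
split; last by apply: (sup_dir _ om) => x _.
move=> C; split; last by case=> nu; exact: sup_dir.
case=> gs [_ [hCb hPl]].
set F := (fun n => alpha (gs n) om) @ \oo.
have [nu [_ hcl]] := @hcomp F _ filterT.
exists nu.
have hsub : forall k : nat, exists n, (k <= n)%N /\
    ball nu (k.+1%:R^-1) (alpha (gs n) om).
  move=> k.
  have := hcl [set y | exists n, (k <= n)%N /\ y = alpha (gs n) om]
    (ball nu (k.+1%:R^-1)).
  case.
  - by exists k => // n /= kn; exists n.
  - by apply: nbhsx_ballx; rewrite invr_gt0 ltr0n.
  by move=> y [[n [kn ->]] hb]; exists n.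
have [phi hphi] := choice hsub.
set oms := fun k => alpha (gs (phi k)) om.
have homs : oms @ \oo --> nu.
  apply/cvg_ballP => e e0.
  have [K hK] := ltr_add_invr e0; rewrite add0r in hK.
  exists K => // k /= Kk; apply: le_ball (hphi k).2.
  apply: le_trans (ltW hK).
  by rewrite lef_pV2 ?posrE ?ltr0n // ler_nat.
have hP := hcont _ _ homs.
apply: (agree_ball hp (hLXP nu).1 hCb) => x hx hx1; apply: funext => g.
have : (\bigcup_n Gn n) g by rewrite hadm.2.2.
case=> m _ hm.
have hK := Pn_compact Y m hp hadm.
have [c1 _] := hP _ hK; have [d1 _] := hPl _ hK.
apply/eqP; rewrite -subr_eq0; apply/eqP; apply: nrm_eq0.
apply/eqP; rewrite eq_le nrm_ge0 andbT.
apply/ler_addgt0Pr => e e0; rewrite add0r.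
have e2 : 0 < e / 2 by rewrite divr_gt0.
have [N1 HN1] := cvg0_lt d1 e2.
have [N2 HN2] := cvg0_lt c1 e2.
set k := maxn N1 N2.
have b1 := HN1 (phi k) (leq_trans (leq_maxl N1 N2) (hphi k).1).
have b2 := HN2 k (leq_maxr N1 N2).
have t1 := pt_bound (opsub (opcomp (V (gs (phi k)))
   (opcomp (A om) (V (gopp (gs (phi k)))))) C) hp hx hx1 hm.
have t2 := pt_bound (opsub (A (oms k)) (A nu)) hp hx hx1 hm.
have r1 := le_lt_trans t1 b1; have r2 := le_lt_trans t2 b2.
rewrite lte_fin /opsub in r1; rewrite lte_fin /opsub in r2.
rewrite -(hcov om (gs (phi k)) x hx) -/(oms k) in r1.
have -> : A nu x g - C x g = (A (oms k) x g - C x g) - (A (oms k) x g - A nu x g).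
  by rewrite opprB [RHS]addrC addrA subrK.
apply: le_trans (nrmD _ _) _; rewrite nrmN.
have : e / 2 + e / 2 = e by field.
lra.
Qed.
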